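(* Let $n\ge 2$. The maps $\sigma_1,\dots,\sigma_{n-1}$ on the set $\widetilde{\mathcal T}_n=\mathcal T_n\times\mathbb Z/n\mathbb Z$ of augmented rooted labeled trees defined in the context define an action of the braid group $B_n$ on $\widetilde{\mathcal T}_n$: they are bijections satisfying $\sigma_i\sigma_j=\sigma_j\sigma_i$ for $|i-j|\ge2$ and $\sigma_i\sigma_{i+1}\sigma_i=\sigma_{i+1}\sigma_i\sigma_{i+1}$ for $1\le i\le n-2$.
   Context: $\mathcal T_n$ is the set of rooted trees with vertices labeled $1,\dots,n$; $v_i$ is the vertex labeled $i$. Maps $\sigma_i$ on $\mathcal T_n$: if $v_{i+1}$ is the root of $T$, $\sigma_iT$ is $T$ with labels $i,i+1$ interchanged. Otherwise form $T_+$ by adding a vertex $v_0$ as parent of the root, write $a\to b$ for ''$a$ is the parent of $b$'', and: (0) if neither of $v_i,v_{i+1}$ is the parent of the other and they have different parents, interchange labels $i,i+1$; (1) if $v_k\to v_i\to v_{i+1}$, make $v_k\to v_{i+1}\to v_i$, other relations unchanged; (2) if $v_k\to v_{i+1}\to v_i$, make $v_i,v_{i+1}$ both children of $v_k$ and interchange their sets of other children, other relations unchanged; (3) if $v_i,v_{i+1}$ share parent $v_k$, interchange their sets of children and then make $v_{i+1}$ a child of $v_i$; then delete $v_0$. Reduced weight in $T$ with root $v_r$: $\overline w(v_r)=1$; if $v_i$ is a child of the root, $\overline w(v_i)$ is the number of vertices in the subtree rooted at $v_i$ (including $v_i$); otherwise $\overline w(v_i)=0$. For $(T,\varepsilon)\in\widetilde{\mathcal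 T}_n$ with root $v_r$: $\sigma_i(T,\varepsilon)=(\sigma_iT,\varepsilon)$ if $i\ne r-1$, and $\sigma_{r-1}(T,\varepsilon)=(\sigma_{r-1}T,\varepsilon+\overline w(v_{r-1}))$ with $\overline w$ computed in $T$. *)

(* Defs.v *)
From mathcomp Require Import all_boot all_order all_algebra.
Set Implicit Arguments. Unset Strict Implicit. Unset Printing Implicit Defensive.
Import GRing.Theory.

(* Vertex v_(j+1) (label j+1, 1 <= j+1 <= n) is represented by the ordinal j : 'I_n.
   A rooted tree is represented by its parent function p : 'I_n -> option 'I_n,
   where p v = None means v is the root (equivalently, in T_+, v is a child of v_0). *)
Definition ptree n := {ffun 'I_n -> option 'I_n}.

Definition pstep n (p : ptree n) (o : option 'I_n) : option 'I_n :=
  if o is Some w then p w else None.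

Definition is_tree n (p : ptree n) : bool :=
  (#|[set v | p v == None]| == 1) &&
  [forall v, iter n (pstep p) (Some v) == None].

Definition desc n (p : ptree n) (v u : 'I_n) : bool :=
  [exists k : 'I_n.+1, iter k (pstep p) (Some u) == Some v].

Definition wbar n (p : ptree n) (v : 'I_n) : nat :=
  if p v == None then 1
  else if p v is Some r then (if p r == None then #|[set u | desc p v u]| else 0)
  else 0.

Definition swapv n (a b v : 'I_n) : 'I_n :=
  if v == a then b else if v == b then a else v.

Definition relabel n (a b : 'I_n) (p : ptree n) : ptree n :=
  [ffun v => omap (swapv a b) (p (swapv a b v))].

(* sigma on trees, with a = v_i and b = v_(i+1) *)
Definition sigmaT n (a b : 'I_n) (p : ptree n) : ptree n :=
  if p b == None then relabel a b p
  else if p b == Some a then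
    [ffun v => if v == b then p a else if v == a then Some b else p v]
  else if p a == Some b then
    [ffun v => if v == a then p b else if v == b then p b
               else omap (swapv a b) (p v)]
  else if p a == p b then
    [ffun v => if v == b then Some a else if v == a then p a
               else omap (swapv a b) (p v)]
  else relabel a b p.

Definition aug n := (ptree n * 'Z_n)%type.

Definition is_aug n (x : aug n) : bool := is_tree x.1.

Definition sigmaA n (a b : 'I_n) (x : aug n) : aug n :=
  (sigmaT a b x.1,
   if x.1 b == None then (x.2 + (wbar x.1 a)%:R)%R else x.2).

Definition sigma n (i : nat) (x : aug n) : aug n :=
  match @insub _ (fun k => k < n) 'I_n i.-1, @insub _ (fun k => k < n) 'I_n i with
  | Some a, Some b => sigmaA a b x
  | _, _ => x
  end.

(* Main.v *)
Require Import Defs.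
From mathcomp Require Import all_boot all_order all_algebra.
From mathcomp Require Import ring.
Set Implicit Arguments. Unset Strict Implicit. Unset Printing Implicit Defensive.
Import GRing.Theory.

Lemma iter_pstep_None n (p : ptree n) k : iter k (pstep p) None = None.
Proof. by elim: k => //= k ->. Qed.

Definition reach n (p : ptree n) (x y : option 'I_n) := exists k, iter k (pstep p) x = y.

Lemma reach_bound n (p : ptree n) x y :
  reach p x y -> exists2 k, k <= n & iter k (pstep p) x = y.
Proof.
case=> k hk.
have hc : fconnect (pstep p) x y by rewrite -hk; apply: fconnect_iter.
exists (findex (pstep p) x y); last exact: iter_findex.
have h2 := findex_max hc.
have h1 : order (pstep p) x <= #|{: option 'I_n}|.
  by rewrite -size_orbit -(card_uniqP (orbit_uniq _ _)) max_card.
rewrite card_option card_ord in h1.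
by rewrite -ltnS (leq_trans h2 h1).
Qed.

Definition wf n (p : ptree n) := forall v, reach p (Some v) None.

Lemma reach_refl n (p : ptree n) x : reach p x x.
Proof. by exists 0. Qed.

Lemma reach_trans n (p : ptree n) x y z : reach p x y -> reach p y z -> reach p x z.
Proof. by case=> k hk [m hm]; exists (m + k); rewrite iterD hk. Qed.

Lemma reach_step n (p : ptree n) x y : p x = Some y -> reach p (Some x) (Some y).
Proof. by move=> h; exists 1. Qed.

Lemma reach_stepo n (p : ptree n) x : reach p (Some x) (p x).
Proof. by exists 1. Qed.

Lemma reach_Some_inv n (p : ptree n) u y :
  reach p (Some u) y -> Some u = y \/ reach p (p u) y.
Proof.
case=> [[|k]] hk; first by left.
by right; exists k; rewrite -hk iterSr.
Qed.

Lemma reach_None n (p : ptree n) y : reach p None y -> y = None.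
Proof. by case=> k; rewrite iter_pstep_None. Qed.

Lemma reach_None_step n (p : ptree n) v :
  reach p (Some v) None <-> reach p (p v) None.
Proof.
split; first by case/reach_Some_inv.
by move=> h; apply: reach_trans (reach_stepo _ _) h.
Qed.

Lemma is_treeP n (p : ptree n) :
  is_tree p <-> (exists r, forall v, (p v == None) = (v == r)) /\ wf p.
Proof.
rewrite /is_tree; split.
  case/andP=> /cards1P [r hr] /forallP hf; split.
    exists r => v.
    by move/setP: hr => /(_ v); rewrite !inE.
  by move=> v; exists n; apply/eqP.
case=> [[r hr] hw]; apply/andP; split.
  apply/cards1P; exists r; apply/setP => v; by rewrite !inE hr.
apply/forallP => v; case: (reach_bound (hw v)) => k hk hi.
have e : iter n (pstep p) (Some v) = iter (n - k) (pstep p) (iter k (pstep p) (Some v)).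
  by rewrite -iterD subnK.
by rewrite e hi iter_pstep_None.
Qed.

Lemma descP n (p : ptree n) x u : reflect (reach p (Some u) (Some x)) (desc p x u).
Proof.
apply: (iffP existsP).
  by case=> k /eqP h; exists k.
move=> /reach_bound [k hk hi].
by exists (Ordinal (hk : k < n.+1)); apply/eqP.
Qed.

Lemma cycle_false n (p : ptree n) x : wf p -> reach p (p x) (Some x) -> False.
Proof.
move=> hw [k hk].
have hc : forall m, iter (m * k.+1) (pstep p) (Some x) = Some x.
  elim=> [|m IH]; first by [].
  by rewrite mulSn iterD IH iterSr.
case: (hw x) => K hK.
have := hc K.
have hle : K <= K * k.+1 by rewrite leq_pmulr.
by rewrite -(subnK hle) iterD hK iter_pstep_None.
Qed.

Lemma antisym n (p : ptree n) x y : wf p ->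
  reach p (Some x) (Some y) -> reach p (Some y) (Some x) -> x = y.
Proof.
move=> hw hxy hyx.
case/reach_Some_inv: hxy => [[] //|h].
by case: (cycle_false hw (reach_trans h hyx)).
Qed.

Lemma wf_ind n (p : ptree n) (P : 'I_n -> Prop) : wf p ->
  (forall v, (forall u, reach p (p v) (Some u) -> P u) -> P v) -> forall v, P v.
Proof.
move=> hw H.
have key : forall k v, iter k (pstep p) (Some v) = None ->
   forall u, reach p (Some v) (Some u) -> P u.
  elim=> [|k IH] v //.
  rewrite iterSr /= => hk.
  have IHv : forall u, reach p (p v) (Some u) -> P u.
    case E: (p v) => [w|]; first by rewrite E in hk; exact: IH w hk.
    by move=> u /reach_None.
  have Pv := H v IHv.
  by move=> u /reach_Some_inv [[<-] | ]; [exact Pv | exact: IHv].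
move=> v; case: (hw v) => k hk; exact: (key k v hk v (reach_refl _ _)).
Qed.

Lemma desc_rec n (p : ptree n) x u :
  desc p x u = (u == x) || (if p u is Some w then desc p x w else false).
Proof.
apply/descP/idP.
  case/reach_Some_inv => [[->]|]; first by rewrite eqxx.
  case: (p u) => [w|]; last by move/reach_None.
  by move/descP ->; rewrite orbT.
case/orP; first by move/eqP->; exact: reach_refl.
case E: (p u) => [w|] // /descP h.
exact: reach_trans (reach_step E) h.
Qed.

Lemma desc_char n (q : ptree n) x (Phi : pred 'I_n) : wf q ->
  (forall u, Phi u = (u == x) || (if q u is Some w then Phi w else false)) ->
  forall u, desc q x u = Phi u.
Proof.
move=> hw hP; apply: (wf_ind hw) => u IH.
rewrite desc_rec hP; congr (_ || _).
case E: (q u) => [w|] //; apply: IH; rewrite E; exact: reach_refl.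
Qed.

Lemma desc_refl n (p : ptree n) x : desc p x x.
Proof. by rewrite desc_rec eqxx. Qed.

Lemma desc_trans n (p : ptree n) x y z : desc p x y -> desc p y z -> desc p x z.
Proof. move=> /descP h1 /descP h2; apply/descP; exact: reach_trans h2 h1. Qed.

Lemma desc_par n (p : ptree n) x y : p x = Some y -> desc p y x.
Proof. by move=> h; apply/descP; apply: reach_step. Qed.

Lemma desc_antisym n (p : ptree n) x y : wf p -> desc p x y -> desc p y x -> x = y.
Proof. by move=> hw /descP h1 /descP h2; apply: antisym hw h2 h1. Qed.

Lemma no_loop n (p : ptree n) x : wf p -> p x != Some x.
Proof. by move=> hw; apply/eqP => h; apply: (@cycle_false _ p x hw); rewrite h; exact: reach_refl. Qed.

Lemma par_not_desc n (p : ptree n) x y : wf p -> p x = Some y -> desc p x y = false.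
Proof.
move=> hw h; apply/negbTE/negP => hd.
have e := desc_antisym hw hd (desc_par h).
by move: (no_loop x hw); rewrite h e eqxx.
Qed.

Lemma desc_total n (p : ptree n) x y u : desc p x u -> desc p y u -> desc p x y || desc p y x.
Proof.
move=> /descP [k hk] /descP [m hm].
case: (leqP k m) => h.
  apply/orP; right; apply/descP; exists (m - k).
  by rewrite -hk -iterD subnK.
apply/orP; left; apply/descP; exists (k - m).
by rewrite -hm -iterD subnK // ltnW.
Qed.

Lemma swapv_l n (a b : 'I_n) : swapv a b a = b.
Proof. by rewrite /swapv eqxx. Qed.
Lemma swapv_r n (a b : 'I_n) : swapv a b b = a.
Proof. by rewrite /swapv eqxx; case: eqP. Qed.
Lemma swapv_o n (a b v : 'I_n) : v != a -> v != b -> swapv a b v = v.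
Proof. by rewrite /swapv => /negbTE -> /negbTE ->. Qed.
Lemma swapvK n (a b : 'I_n) : involutive (swapv a b).
Proof.
move=> v; rewrite /swapv.
case: (altP (v =P a)) => [->|va]; first by rewrite eqxx; case: eqP.
case: (altP (v =P b)) => [->|vb]; first by rewrite eqxx.
by rewrite (negbTE va) (negbTE vb).
Qed.
Lemma swapv_inj n (a b : 'I_n) : injective (swapv a b).
Proof. exact: inv_inj (@swapvK n a b). Qed.

Definition sT n (a b : 'I_n) (xa xb : option 'I_n) (v : 'I_n) (xv : option 'I_n) : option 'I_n :=
  if xb == None then
    (if v == a then omap (swapv a b) xb else if v == b then omap (swapv a b) xa
     else omap (swapv a b) xv)
  else if xb == Some a then (if v == b then xa else if v == a then Some b else xv)
  else if xa == Some b then (if v == a then xb else if v == b then xb else omap (swapv a b) xv)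
  else if xa == xb then (if v == b then Some a else if v == a then xa else omap (swapv a b) xv)
  else (if v == a then omap (swapv a b) xb else if v == b then omap (swapv a b) xa
     else omap (swapv a b) xv).

Lemma relabelE n (a b : 'I_n) p v : relabel a b p v =
  (if v == a then omap (swapv a b) (p b) else if v == b then omap (swapv a b) (p a)
     else omap (swapv a b) (p v)).
Proof.
rewrite /relabel ffunE.
case: (altP (v =P a)) => [->|va]; first by rewrite swapv_l.
case: (altP (v =P b)) => [->|vb]; first by rewrite swapv_r.
by rewrite swapv_o.
Qed.

Lemma sigmaT_E n (a b : 'I_n) p v : sigmaT a b p v = sT a b (p a) (p b) v (p v).
Proof.
rewrite /sigmaT /sT; case: (p b == None); first exact: relabelE.
case: (p b == Some a); first by rewrite ffunE.
case: (p a == Some b); first by rewrite ffunE.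
case: (p a == p b); first by rewrite ffunE.
exact: relabelE.
Qed.

Definition gf n (a b : 'I_n) (xa xb : option 'I_n) : 'I_n -> 'I_n :=
  if xb == Some a then id else swapv a b.

Lemma omap_id n (x : option 'I_n) : omap id x = x.
Proof. by case: x. Qed.

Lemma sT_o n (a b : 'I_n) xa xb v xv : v != a -> v != b ->
  sT a b xa xb v xv = omap (gf a b xa xb) xv.
Proof.
move=> /negbTE va /negbTE vb; rewrite /sT /gf va vb.
case: (xb =P None) => [->|_] //.
case: (xb =P Some a) => [_|_]; first by rewrite omap_id.
by case: ifP => _ //; case: ifP.
Qed.

Lemma sT_None n (a b : 'I_n) xa xb v xv : a != b ->
  (sT a b xa xb v xv == None) = ((if v == a then xb else if v == b then xa else xv) == None).
Proof.
move=> hab; rewrite /sT.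
case: (altP (v =P a)) => [->|va]; first rewrite ?eqxx ?(negbTE hab).
  by case: xa xb => [?|] [?|] /=; repeat (case: ifP => //=).
case: (altP (v =P b)) => [_|vb].
  by case: xa xb => [?|] [?|] /=; repeat (case: ifP => //=).
by case: xa xb xv => [?|] [?|] [?|] /=; repeat (case: ifP => //=).
Qed.

Lemma rel_wf n (p q : ptree n) a b : wf p ->
  (forall u, q u = omap (swapv a b) (p (swapv a b u))) -> wf q.
Proof.
move=> hw hq.
have H : forall v, reach q (Some (swapv a b v)) None.
  apply: (wf_ind hw) => v IH; apply/reach_None_step; rewrite hq swapvK.
  case E: (p v) => [w|] /=; last exact: reach_refl.
  by apply: IH; rewrite E; exact: reach_refl.
by move=> v; rewrite -(swapvK a b v); exact: H.
Qed.

Lemma rel_desc n (p q : ptree n) a b : wf q ->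
  (forall u, q u = omap (swapv a b) (p (swapv a b u))) ->
  forall x u, desc q x u = desc p (swapv a b x) (swapv a b u).
Proof.
move=> hw hq x.
apply: (@desc_char _ q x (fun u => desc p (swapv a b x) (swapv a b u)) hw) => u.
rewrite {1}desc_rec (inj_eq (@swapv_inj _ a b)) hq.
by case: (p (swapv a b u)) => [w|] //=; rewrite swapvK.
Qed.

Lemma c1_wf n (p q : ptree n) a b : a != b -> wf p -> p b = Some a ->
  q a = Some b -> q b = p a -> (forall v, v != a -> v != b -> q v = p v) -> wf q.
Proof.
move=> hab hw pb qa qb qo.
apply: (wf_ind hw) => v IH.
case: (altP (v =P a)) => [ev|va]; first subst v.
  apply/reach_None_step; rewrite qa; apply/reach_None_step; rewrite qb.
  case E: (p a) => [w|]; last exact: reach_refl.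
  by apply: IH; rewrite E; exact: reach_refl.
case: (altP (v =P b)) => [ev|vb]; first subst v.
  apply/reach_None_step; rewrite qb.
  case E: (p a) => [w|]; last exact: reach_refl.
  by apply: IH; rewrite pb; exact: reach_step E.
apply/reach_None_step; rewrite qo //.
case E: (p v) => [w|]; last exact: reach_refl.
by apply: IH; rewrite E; exact: reach_refl.
Qed.

Lemma c1_desc n (p q : ptree n) a b : a != b -> wf p -> wf q -> p b = Some a ->
  q a = Some b -> q b = p a -> (forall v, v != a -> v != b -> q v = p v) ->
  forall x u, desc q x u = (if x == a then desc p a u && ~~ desc p b u
                            else if x == b then desc p a u else desc p x u).
Proof.
move=> hab hw hwq pb qa qb qo x.
apply: (@desc_char _ q x (fun u => if x == a then desc p a u && ~~ desc p b u
                            else if x == b then desc p a u else desc p x u) hwq) => u.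
have nba : desc p b a = false := par_not_desc hw pb.
have dab : desc p a b := desc_par pb.
have hba : (b == a) = false by rewrite eq_sym; apply/negbTE.
case: (altP (x =P a)) => [->|xa] /=.
  case: (altP (u =P a)) => [->|ua]; first by rewrite desc_refl nba ?eqxx.
  case: (altP (u =P b)) => [->|ub].
    rewrite qb (desc_refl p b) andbF ?hba /=.
    by case E: (p a) => [w|] //; rewrite (par_not_desc hw E).
  rewrite qo // (desc_rec p a u) (desc_rec p b u) ?(negbTE ua) ?(negbTE ub) /=.
  by case: (p u).
case: (altP (x =P b)) => [->|xb] /=.
  case: (altP (u =P a)) => [->|ua]; first by rewrite qa /= desc_refl dab ?(negbTE hab).
  case: (altP (u =P b)) => [->|ub]; first by rewrite dab ?eqxx.
  by rewrite qo // (desc_rec p a u) ?(negbTE ua) ?(negbTE ub).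
case: (altP (u =P a)) => [->|ua].
  rewrite qa /= (desc_rec p x b) pb; rewrite eq_sym in xa; rewrite eq_sym in xb.
  by rewrite (negbTE xa) (negbTE xb).
case: (altP (u =P b)) => [->|ub].
  rewrite qb (desc_rec p x b) pb (desc_rec p x a).
  by rewrite eq_sym in xa; rewrite (negbTE xa).
by rewrite qo // {1}desc_rec.
Qed.

Lemma c2_zb n (p : ptree n) a b z : wf p -> p a = Some b -> p b = Some z -> z != a.
Proof.
move=> hw pa pb; apply/eqP => e; subst z.
by move: (par_not_desc hw pa); rewrite (desc_par pb).
Qed.

Lemma c2_wf n (p q : ptree n) a b : a != b -> wf p -> p a = Some b ->
  q a = p b -> q b = p b ->
  (forall v, v != a -> v != b -> q v = omap (swapv a b) (p v)) -> wf q.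
Proof.
move=> hab hw pa qa qb qo.
apply: (wf_ind hw) => v IH.
case: (altP (v =P a)) => [ev|va]; first subst v.
  apply/reach_None_step; rewrite qa.
  case E: (p b) => [z|]; last exact: reach_refl.
  by apply: IH; rewrite pa; exact: reach_step E.
case: (altP (v =P b)) => [ev|vb]; first subst v.
  apply/reach_None_step; rewrite qb.
  case E: (p b) => [z|]; last exact: reach_refl.
  by apply: IH; rewrite E; exact: reach_refl.
apply/reach_None_step; rewrite qo //.
case E: (p v) => [w|]; last exact: reach_refl.
rewrite /=.
case: (altP (w =P a)) => [ew|wa].
  subst w; rewrite swapv_l; apply/reach_None_step; rewrite qb.
  case E2: (p b) => [z|]; last exact: reach_refl.
  apply: IH; rewrite E; apply: reach_trans (reach_step pa) (reach_step E2).
case: (altP (w =P b)) => [ew|wb].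
  subst w; rewrite swapv_r; apply/reach_None_step; rewrite qa.
  case E2: (p b) => [z|]; last exact: reach_refl.
  by apply: IH; rewrite E; exact: reach_step E2.
by rewrite swapv_o //; apply: IH; rewrite E; exact: reach_refl.
Qed.

Lemma c2_desc n (p q : ptree n) a b : a != b -> wf p -> wf q -> p a = Some b ->
  q a = p b -> q b = p b ->
  (forall v, v != a -> v != b -> q v = omap (swapv a b) (p v)) ->
  forall x u, desc q x u =
    (if x == a then desc p b (swapv a b u) && ~~ desc p a (swapv a b u)
     else if x == b then desc p a (swapv a b u) else desc p x u).
Proof.
move=> hab hw hwq pa qa qb qo x.
apply: (@desc_char _ q x (fun u =>
    (if x == a then desc p b (swapv a b u) && ~~ desc p a (swapv a b u)
     else if x == b then desc p a (swapv a b u) else desc p x u)) hwq) => u.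
have nab : desc p a b = false := par_not_desc hw pa.
have hba : (b == a) = false by rewrite eq_sym; apply/negbTE.
have zfacts : forall z, p b = Some z -> [/\ z != a, z != b, swapv a b z = z &
                 desc p a z = false].
  move=> z E; have za := c2_zb hw pa E.
  have zb : z != b by apply/eqP => e; move: (no_loop b hw); rewrite E e ?eqxx.
  split => //; first by rewrite swapv_o.
  apply/negbTE/negP => hd.
  have hza : desc p z a := desc_trans (desc_par E) (desc_par pa).
  by move: za; rewrite (desc_antisym hw hza hd) ?eqxx.
case: (altP (x =P a)) => [->|xa] /=.
  case: (altP (u =P a)) => [->|ua]; first by rewrite swapv_l desc_refl nab ?eqxx.
  case: (altP (u =P b)) => [->|ub].
    rewrite swapv_r qb desc_refl /= andbF ?hba /=.
    case E: (p b) => [z|] //; case: (zfacts z E) => _ _ -> _.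
    by rewrite (par_not_desc hw E).
  rewrite qo // swapv_o // (desc_rec p b u) (desc_rec p a u) ?(negbTE ua) ?(negbTE ub) /=.
  by case: (p u) => [w|] //=; rewrite swapvK.
case: (altP (x =P b)) => [->|xb] /=.
  case: (altP (u =P a)) => [->|ua].
    rewrite swapv_l qa nab ?(negbTE hab) /=.
    by case E: (p b) => [z|] //; case: (zfacts z E) => _ _ -> ->.
  case: (altP (u =P b)) => [->|ub]; first by rewrite swapv_r desc_refl ?eqxx.
  rewrite qo // swapv_o // (desc_rec p a u) ?(negbTE ua) /=.
  by case: (p u) => [w|] //=; rewrite swapvK.
have dxa : desc p x a = desc p x b.
  by rewrite (desc_rec p x a) pa; rewrite eq_sym in xa; rewrite (negbTE xa).
case: (altP (u =P a)) => [->|ua].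
  rewrite qa dxa (desc_rec p x b); rewrite eq_sym in xa; rewrite eq_sym in xb.
  by rewrite (negbTE xa) (negbTE xb).
case: (altP (u =P b)) => [->|ub]; first by rewrite qb {1}desc_rec.
rewrite qo // {1}desc_rec; congr (_ || _).
case: (p u) => [w|] //=.
case: (altP (w =P a)) => [->|wa]; first by rewrite swapv_l dxa.
case: (altP (w =P b)) => [->|wb]; first by rewrite swapv_r dxa.
by rewrite swapv_o.
Qed.

Lemma c3_wf n (p q : ptree n) a b : a != b -> wf p -> p a = p b -> p b != None ->
  q b = Some a -> q a = p a ->
  (forall v, v != a -> v != b -> q v = omap (swapv a b) (p v)) -> wf q.
Proof.
move=> hab hw pab pbN qb qa qo.
case E: (p b) pbN => [z|] // _.
rewrite E in pab.
apply: (wf_ind hw) => v IH.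
case: (altP (v =P a)) => [ev|va]; first subst v.
  apply/reach_None_step; rewrite qa pab.
  by apply: IH; rewrite pab; exact: reach_refl.
case: (altP (v =P b)) => [ev|vb]; first subst v.
  apply/reach_None_step; rewrite qb; apply/reach_None_step; rewrite qa pab.
  by apply: IH; rewrite E; exact: reach_refl.
apply/reach_None_step; rewrite qo //.
case E2: (p v) => [w|]; last exact: reach_refl.
rewrite /=.
case: (altP (w =P a)) => [ew|wa].
  subst w; rewrite swapv_l; apply/reach_None_step; rewrite qb.
  apply/reach_None_step; rewrite qa pab.
  by apply: IH; rewrite E2; exact: reach_step pab.
case: (altP (w =P b)) => [ew|wb].
  subst w; rewrite swapv_r; apply/reach_None_step; rewrite qa pab.
  by apply: IH; rewrite E2; exact: reach_step E.
by rewrite swapv_o //; apply: IH; rewrite E2; exact: reach_refl.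
Qed.

Lemma c3_desc n (p q : ptree n) a b : a != b -> wf p -> wf q -> p a = p b -> p b != None ->
  q b = Some a -> q a = p a ->
  (forall v, v != a -> v != b -> q v = omap (swapv a b) (p v)) ->
  forall x u, desc q x u =
    (if x == a then desc p a u || desc p b u
     else if x == b then desc p a (swapv a b u) else desc p x u).
Proof.
move=> hab hw hwq pab pbN qb qa qo x.
case E: (p b) pbN => [z|] // _.
rewrite E in pab.
apply: (@desc_char _ q x (fun u =>
    (if x == a then desc p a u || desc p b u
     else if x == b then desc p a (swapv a b u) else desc p x u)) hwq) => u.
have hba : (b == a) = false by rewrite eq_sym; apply/negbTE.
have za : z != a by apply/eqP => e; move: (no_loop a hw); rewrite pab e ?eqxx.
have zb : z != b by apply/eqP => e; move: (no_loop b hw); rewrite E e ?eqxx.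
case: (altP (x =P a)) => [->|xa] /=.
  case: (altP (u =P a)) => [->|ua]; first by rewrite desc_refl ?eqxx.
  case: (altP (u =P b)) => [->|ub]; first by rewrite qb /= !desc_refl orbT.
  rewrite qo // (desc_rec p a u) (desc_rec p b u) ?(negbTE ua) ?(negbTE ub) /=.
  case: (p u) => [w|] //=.
  case: (altP (w =P a)) => [->|wa]; first by rewrite swapv_l !desc_refl orbT.
  case: (altP (w =P b)) => [->|wb]; first by rewrite swapv_r !desc_refl orbT.
  by rewrite swapv_o.
case: (altP (x =P b)) => [->|xb] /=.
  case: (altP (u =P a)) => [->|ua].
    by rewrite swapv_l qa pab (desc_rec p a b) E ?hba ?(negbTE hab) /= swapv_o.
  case: (altP (u =P b)) => [->|ub]; first by rewrite swapv_r desc_refl ?eqxx.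
  rewrite qo // swapv_o // (desc_rec p a u) ?(negbTE ua) /=.
  by case: (p u) => [w|] //=; rewrite swapvK.
have xa' : (a == x) = false by rewrite eq_sym; apply/negbTE.
have xb' : (b == x) = false by rewrite eq_sym; apply/negbTE.
have dxa : desc p x a = desc p x z by rewrite (desc_rec p x a) pab xa'.
have dxb : desc p x b = desc p x z by rewrite (desc_rec p x b) E xb'.
case: (altP (u =P a)) => [->|ua]; first by rewrite qa pab dxa xa'.
case: (altP (u =P b)) => [->|ub]; first by rewrite qb /= dxb dxa xb'.
rewrite qo // {1}desc_rec; congr (_ || _).
case: (p u) => [w|] //=.
case: (altP (w =P a)) => [->|wa]; first by rewrite swapv_l dxa dxb.
case: (altP (w =P b)) => [->|wb]; first by rewrite swapv_r dxa dxb.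
by rewrite swapv_o.
Qed.

Lemma treeT n (p : ptree n) a b : a != b -> is_tree p -> is_tree (sigmaT a b p).
Proof.
move=> hab /is_treeP [[r hr] hw]; apply/is_treeP; split.
  exists (swapv a b r) => v; rewrite sigmaT_E sT_None //.
  have -> : (if v == a then p b else if v == b then p a else p v) = p (swapv a b v).
    by rewrite /swapv; case: (v == a) => //; case: (v == b).
  by rewrite hr -{1}(swapvK a b r) (inj_eq (@swapv_inj _ a b)).
rewrite /sigmaT; case: ifP => hb.
  by apply: (rel_wf hw) => u; rewrite ffunE.
case: ifP => h1.
  apply: (c1_wf hab hw (eqP h1)).
  - by rewrite ffunE (negbTE hab) eqxx.
  - by rewrite ffunE eqxx.
  - by move=> v va vb; rewrite ffunE (negbTE va) (negbTE vb).
case: ifP => h2.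
  apply: (c2_wf hab hw (eqP h2)).
  - by rewrite ffunE eqxx.
  - by rewrite ffunE eq_sym (negbTE hab) eqxx.
  - by move=> v va vb; rewrite ffunE (negbTE va) (negbTE vb).
case: ifP => h3.
  apply: (c3_wf hab hw (eqP h3) (negbT hb)).
  - by rewrite ffunE eqxx.
  - by rewrite ffunE (negbTE hab) eqxx.
  - by move=> v va vb; rewrite ffunE (negbTE va) (negbTE vb).
by apply: (rel_wf hw) => u; rewrite ffunE.
Qed.

Local Open Scope ring_scope.
Definition sz n (p : ptree n) x : nat := #|[set u | desc p x u]|.
Definition szZ n (p : ptree n) x : 'Z_n := (sz p x)%:R.

Definition szAg {R : Type} (add sub : R -> R -> R) n (a b : 'I_n) (xa xb : option 'I_n) (sa sb : R) : R :=
  if xb == None then sb else if xb == Some a then sub sa sb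
  else if xa == Some b then sub sb sa else if xa == xb then add sa sb else sb.
Definition szTg {R : Type} (add sub : R -> R -> R) n (a b : 'I_n) (xa xb : option 'I_n) (sa sb : R) x (sx : R) : R :=
  if x == a then szAg add sub a b xa xb sa sb else if x == b then sa else sx.
Definition szT {R : nzRingType} n (a b : 'I_n) (xa xb : option 'I_n) (sa sb : R) x (sx : R) : R :=
  szTg (fun u v => u + v) (fun u v => u - v) a b xa xb sa sb x sx.

Lemma card_swap n (a b : 'I_n) (P : pred 'I_n) :
  #|[set u | P (swapv a b u)]| = #|[set u | P u]|.
Proof.
have -> : [set u | P (swapv a b u)] = swapv a b @^-1: [set u | P u].
  by apply/setP => u; rewrite !inE.
exact: card_preimset (@swapv_inj _ a b).
Qed.

Lemma card_eqP n (P Q : pred 'I_n) : (forall u, P u = Q u) -> #|[set u | P u]| = #|[set u | Q u]|.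
Proof. by move=> h; apply: eq_card => u; rewrite !inE h. Qed.

Lemma card_diff n (A B : pred 'I_n) : (forall u, B u -> A u) ->
  (#|[set u | A u && ~~ B u]|%:R : 'Z_n) = #|[set u | A u]|%:R - #|[set u | B u]|%:R.
Proof.
move=> h.
have e : [set u | A u && ~~ B u] = [set u | A u] :\: [set u | B u].
  by apply/setP => u; rewrite !inE andbC.
have s : [set u | B u] \subset [set u | A u].
  by apply/subsetP => u; rewrite !inE; exact: h.
rewrite e cardsD (setIidPr s) natrB //; exact: subset_leq_card.
Qed.

Lemma card_union n (A B : pred 'I_n) : (forall u, A u -> B u -> False) ->
  (#|[set u | A u || B u]|%:R : 'Z_n) = #|[set u | A u]|%:R + #|[set u | B u]|%:R.
Proof.
move=> h.
have e : [set u | A u || B u] = [set u | A u] :|: [set u | B u].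
  by apply/setP => u; rewrite !inE.
have i0 : [set u | A u] :&: [set u | B u] = set0.
  apply/setP => u; rewrite !inE; apply/negbTE/negP => /andP [h1 h2]; exact: h u h1 h2.
by rewrite -natrD -cardsUI e i0 cards0 addn0.
Qed.

Lemma szE n (p : ptree n) a b x : a != b -> is_tree p ->
  szZ (sigmaT a b p) x = szT a b (p a) (p b) (szZ p a) (szZ p b) x (szZ p x).
Proof.
move=> hab tp; have tq := treeT hab tp.
case/is_treeP: tp => [_ hw]; case/is_treeP: tq => [_].
rewrite /szZ /sz /szT /szTg /szAg /sigmaT.
have relcase : wf (relabel a b p) ->
   (#|[set u | desc (relabel a b p) x u]|%:R : 'Z_n) =
   (if x == a then #|[set u | desc p b u]|%:R
    else if x == b then #|[set u | desc p a u]|%:R else #|[set u | desc p x u]|%:R).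
  move=> hwq.
  have hd := rel_desc hwq (fun u => ffunE _ _) x.
  rewrite (card_eqP hd) (card_swap a b (fun u => desc p (swapv a b x) u)).
  case: (altP (x =P a)) => [->|xa]; first by rewrite swapv_l.
  case: (altP (x =P b)) => [->|xb]; first by rewrite swapv_r.
  by rewrite swapv_o.
case: ifP => hb; first exact: relcase.
case: ifP => h1.
  move=> hwq; have pb := eqP h1.
  have hd := c1_desc hab hw hwq pb (ltac:(by rewrite ffunE (negbTE hab) eqxx))
     (ltac:(by rewrite ffunE eqxx))
     (ltac:(by move=> v va vb; rewrite ffunE (negbTE va) (negbTE vb))) x.
  rewrite (card_eqP hd).
  case: (altP (x =P a)) => [_|xa] /=.
    by rewrite card_diff // => u; apply: desc_trans (desc_par pb).
  by case: (altP (x =P b)).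
case: ifP => h2.
  move=> hwq; have pa := eqP h2.
  have hd := c2_desc hab hw hwq pa (ltac:(by rewrite ffunE eqxx))
     (ltac:(by rewrite ffunE eq_sym (negbTE hab) eqxx))
     (ltac:(by move=> v va vb; rewrite ffunE (negbTE va) (negbTE vb))) x.
  rewrite (card_eqP hd).
  case: (altP (x =P a)) => [_|xa] /=.
    rewrite (card_swap a b (fun u => desc p b u && ~~ desc p a u)).
    by rewrite card_diff // => u; apply: desc_trans (desc_par pa).
  case: (altP (x =P b)) => [_|xb] //=.
  by rewrite (card_swap a b (fun u => desc p a u)).
case: ifP => h3.
  move=> hwq; have pab := eqP h3.
  have hd := c3_desc hab hw hwq pab (negbT hb) (ltac:(by rewrite ffunE eqxx))
     (ltac:(by rewrite ffunE (negbTE hab) eqxx))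
     (ltac:(by move=> v va vb; rewrite ffunE (negbTE va) (negbTE vb))) x.
  rewrite (card_eqP hd).
  case: (altP (x =P a)) => [_|xa] /=.
    rewrite card_union // => u h1u h2u.
    case E: (p b) hb => [z|] // _; rewrite E in pab.
    have hba : (b == a) = false by rewrite eq_sym; apply/negbTE.
    case/orP: (desc_total h1u h2u).
      by rewrite (desc_rec p a b) E hba /= (par_not_desc hw pab).
    by rewrite (desc_rec p b a) pab (negbTE hab) /= (par_not_desc hw E).
  case: (altP (x =P b)) => [_|xb] //=.
  by rewrite (card_swap a b (fun u => desc p a u)).
exact: relcase.
Qed.

Local Close Scope ring_scope.

Lemma eqSome (T : eqType) (x y : T) : (Some x == Some y) = (x == y).
Proof. by []. Qed.
Lemma eqSN (T : eqType) (x : T) : (Some x == None) = false.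
Proof. by []. Qed.
Lemma eqNS (T : eqType) (x : T) : (None == Some x) = false.
Proof. by []. Qed.

Local Open Scope ring_scope.
Definition wZg {R : Type} (zero one : R) n (a b : 'I_n) (xa xb : option 'I_n) (sa : R) : R :=
  if xb == None then (if xa == None then one else if xa == Some b then sa else zero) else zero.
Definition wZ {R : nzRingType} n (a b : 'I_n) (xa xb : option 'I_n) (sa : R) : R := wZg 0 1 a b xa xb sa.

Lemma wE n (p : ptree n) a b : a != b -> is_tree p ->
  (if p b == None then ((wbar p a)%:R : 'Z_n) else 0) = wZ a b (p a) (p b) (szZ p a).
Proof.
move=> hab /is_treeP [[r hr] _]; rewrite /wZ /wZg /wbar /szZ /sz.
case hb: (p b == None) => //.
have rb : b = r by apply/eqP; rewrite -hr.
case E: (p a) => [w|] //=.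
by rewrite hr -rb eqSome; case: ifP.
Qed.

Lemma sigmaA_E n (a b : 'I_n) p e : sigmaA a b (p, e) =
  (sigmaT a b p, e + (if p b == None then (wbar p a)%:R else 0)).
Proof. by rewrite /sigmaA /=; case: (p b == None); rewrite ?addr0. Qed.
Local Close Scope ring_scope.

Definition acyc3 n (a b c : 'I_n) (xa xb xc : option 'I_n) :=
  [&& xa != Some a, xb != Some b, xc != Some c, ~~ ((xa == Some b) && (xb == Some a)),
   ~~ ((xa == Some c) && (xc == Some a)), ~~ ((xb == Some c) && (xc == Some b)),
   ~~ [&& xa == Some b, xb == Some c & xc == Some a] &
   ~~ [&& xa == Some c, xc == Some b & xb == Some a]].


Ltac splito x a b c :=
  let w := fresh "w" in
  case: x => [w|]; [ case: (altP (w =P a)) => [->|?]; [| case: (altP (w =P b)) => [->|?]; [| case: (altP (w =P c)) => [->|?] ] ] | ].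

Ltac rw_eqF := repeat match goal with
  | H : is_true (?x != ?y) |- context [?x == ?y] => rewrite (negbTE H)
  | H : is_true (?x != ?y) |- context [?y == ?x] => rewrite [y == x]eq_sym (negbTE H)
end.

Ltac simp := rewrite /acyc3 /sT /gf /swapv;
  do 8 (rewrite ?eqSome ?eqSN ?eqNS ?eqxx /=; rw_eqF).

Definition ov n (V : pred 'I_n) (x : option 'I_n) := if x is Some w then V w else true.

Lemma omap_None n m (g : 'I_n -> 'I_m) x : (omap g x == None) = (x == None).
Proof. by case: x. Qed.

Lemma eq_omap n m (g : 'I_n -> 'I_m) (V : pred 'I_n) x y : {in V &, injective g} ->
  ov V x -> ov V y -> (omap g x == omap g y) = (x == y).
Proof.
move=> hi; case: x => [x|]; case: y => [y|] //= hx hy.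
rewrite !eqSome; apply/eqP/eqP => [|->] //; exact: hi.
Qed.

Lemma eq_g n m (g : 'I_n -> 'I_m) (V : pred 'I_n) x y : {in V &, injective g} ->
  V x -> V y -> (g x == g y) = (x == y).
Proof. by move=> hi hx hy; apply/eqP/eqP => [|->] //; exact: hi. Qed.

Lemma swapV n (V : pred 'I_n) a b w : V a -> V b -> V w -> V (swapv a b w).
Proof. by rewrite /swapv => ha hb hw; case: ifP => _ //; case: ifP. Qed.

Lemma swap_map n m (g : 'I_n -> 'I_m) (V : pred 'I_n) a b w : {in V &, injective g} ->
  V a -> V b -> V w -> swapv (g a) (g b) (g w) = g (swapv a b w).
Proof.
move=> hi ha hb hw; rewrite /swapv (eq_g hi hw ha) (eq_g hi hw hb).
by case: ifP => _ //; case: ifP.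
Qed.

Lemma gf_map n m (g : 'I_n -> 'I_m) (V : pred 'I_n) a b xa xb w : {in V &, injective g} ->
  V a -> V b -> ov V xb -> V w ->
  gf (g a) (g b) (omap g xa) (omap g xb) (g w) = g (gf a b xa xb w).
Proof.
move=> hi ha hb hxb hw; rewrite /gf.
have -> : (omap g xb == Some (g a)) = (xb == Some a).
  by rewrite -(eq_omap hi hxb (ha : ov V (Some a))).
by case: ifP => _ //; exact: (swap_map hi ha hb hw).
Qed.

Lemma gfV n (V : pred 'I_n) a b xa xb w : V a -> V b -> V w -> V (gf a b xa xb w).
Proof. by rewrite /gf => ha hb hw; case: ifP => _ //; exact: swapV. Qed.

Lemma gf_fix n (a b : 'I_n) xa xb w : w != a -> w != b -> gf a b xa xb w = w.
Proof. by rewrite /gf => wa wb; case: ifP => _ //; rewrite swapv_o. Qed.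

Lemma omap_swap_map n m (g : 'I_n -> 'I_m) (V : pred 'I_n) a b x : {in V &, injective g} ->
  V a -> V b -> ov V x ->
  omap (swapv (g a) (g b)) (omap g x) = omap g (omap (swapv a b) x).
Proof. by move=> hi ha hb; case: x => [w|] //= hw; rewrite (swap_map hi). Qed.

Lemma ov_swap n (V : pred 'I_n) a b x : V a -> V b -> ov V x -> ov V (omap (swapv a b) x).
Proof. by move=> ha hb; case: x => [w|] //=; exact: swapV. Qed.

Lemma sT_map n m (g : 'I_n -> 'I_m) (V : pred 'I_n) a b xa xb v xv : {in V &, injective g} ->
  V a -> V b -> V v -> ov V xa -> ov V xb -> ov V xv ->
  sT (g a) (g b) (omap g xa) (omap g xb) (g v) (omap g xv) = omap g (sT a b xa xb v xv).
Proof.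
move=> hi ha hb hv hxa hxb hxv; rewrite /sT.
have e1 : (omap g xb == Some (g a)) = (xb == Some a).
  by rewrite -(eq_omap hi hxb (ha : ov V (Some a))).
have e2 : (omap g xa == Some (g b)) = (xa == Some b).
  by rewrite -(eq_omap hi hxa (hb : ov V (Some b))).
rewrite !omap_None e1 e2 (eq_omap hi hxa hxb).
rewrite (eq_g hi hv ha) (eq_g hi hv hb).
rewrite !(omap_swap_map hi) //.
by rewrite !(fun_if (omap g)).
Qed.

Lemma sT_ov n (V : pred 'I_n) a b xa xb v xv :
  V a -> V b -> ov V xa -> ov V xb -> ov V xv -> ov V (sT a b xa xb v xv).
Proof.
move=> ha hb hxa hxb hxv; rewrite /sT.
by repeat case: ifP => _; rewrite ?ov_swap //=.
Qed.

Lemma szT_map {R : Type} (add sub : R -> R -> R) n m (g : 'I_n -> 'I_m) (V : pred 'I_n) a b xa xb (sa sb : R) x sx :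
  {in V &, injective g} -> V a -> V b -> V x -> ov V xa -> ov V xb ->
  szTg add sub (g a) (g b) (omap g xa) (omap g xb) sa sb (g x) sx = szTg add sub a b xa xb sa sb x sx.
Proof.
move=> hi ha hb hx hxa hxb; rewrite /szTg /szAg.
have e1 : (omap g xb == Some (g a)) = (xb == Some a).
  by rewrite -(eq_omap hi hxb (ha : ov V (Some a))).
have e2 : (omap g xa == Some (g b)) = (xa == Some b).
  by rewrite -(eq_omap hi hxa (hb : ov V (Some b))).
rewrite !omap_None e1 e2 (eq_omap hi hxa hxb).
by rewrite (eq_g hi hx ha) (eq_g hi hx hb).
Qed.

Lemma wZ_map {R : Type} (zero one : R) n m (g : 'I_n -> 'I_m) (V : pred 'I_n) a b xa xb (sa : R) :
  {in V &, injective g} -> V a -> V b -> ov V xa -> ov V xb ->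
  wZg zero one (g a) (g b) (omap g xa) (omap g xb) sa = wZg zero one a b xa xb sa.
Proof.
move=> hi ha hb hxa hxb; rewrite /wZg.
have e2 : (omap g xa == Some (g b)) = (xa == Some b).
  by rewrite -(eq_omap hi hxa (hb : ov V (Some b))).
by rewrite !omap_None e2.
Qed.

Definition T3 k := (option 'I_k * option 'I_k * option 'I_k)%type.
Definition stAB k (a b c : 'I_k) (t : T3 k) : T3 k :=
  let: (xa, xb, xc) := t in (sT a b xa xb a xa, sT a b xa xb b xb, sT a b xa xb c xc).
Definition stBC k (a b c : 'I_k) (t : T3 k) : T3 k :=
  let: (xa, xb, xc) := t in (sT b c xb xc a xa, sT b c xb xc b xb, sT b c xb xc c xc).
Definition gAB k (a b c : 'I_k) (t : T3 k) : 'I_k -> 'I_k :=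
  let: (xa, xb, xc) := t in gf a b xa xb.
Definition gBC k (a b c : 'I_k) (t : T3 k) : 'I_k -> 'I_k :=
  let: (xa, xb, xc) := t in gf b c xb xc.
Definition szAB {R : Type} (add sub : R -> R -> R) k (a b c : 'I_k) (t : T3 k) (s : R * R * R) : R * R * R :=
  let: (xa, xb, xc) := t in let: (sa, sb, sc) := s in
  (szTg add sub a b xa xb sa sb a sa, szTg add sub a b xa xb sa sb b sb, szTg add sub a b xa xb sa sb c sc).
Definition szBC {R : Type} (add sub : R -> R -> R) k (a b c : 'I_k) (t : T3 k) (s : R * R * R) : R * R * R :=
  let: (xa, xb, xc) := t in let: (sa, sb, sc) := s in
  (szTg add sub b c xb xc sb sc a sa, szTg add sub b c xb xc sb sc b sb, szTg add sub b c xb xc sb sc c sc).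
Definition wAB {R : Type} (zero one : R) k (a b c : 'I_k) (t : T3 k) (s : R * R * R) : R :=
  let: (xa, xb, xc) := t in let: (sa, sb, sc) := s in wZg zero one a b xa xb sa.
Definition wBC {R : Type} (zero one : R) k (a b c : 'I_k) (t : T3 k) (s : R * R * R) : R :=
  let: (xa, xb, xc) := t in let: (sa, sb, sc) := s in wZg zero one b c xb xc sb.

Definition WL {R : Type} (add sub : R -> R -> R) (zero one : R) k (a b c : 'I_k) (t : T3 k) (s : R * R * R) : R :=
  add (add (wAB zero one a b c t s) (wBC zero one a b c (stAB a b c t) (szAB add sub a b c t s)))
   (wAB zero one a b c (stBC a b c (stAB a b c t)) (szBC add sub a b c (stAB a b c t) (szAB add sub a b c t s))).
Definition WR {R : Type} (add sub : R -> R -> R) (zero one : R) k (a b c : 'I_k) (t : T3 k) (s : R * R * R) : R :=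
  add (add (wBC zero one a b c t s) (wAB zero one a b c (stBC a b c t) (szBC add sub a b c t s)))
   (wBC zero one a b c (stAB a b c (stBC a b c t)) (szAB add sub a b c (stBC a b c t) (szBC add sub a b c t s))).

Definition root1 k (xa xb xc : option 'I_k) :=
  ~~ ((xa == None) && (xb == None)) && ~~ ((xa == None) && (xc == None)) &&
  ~~ ((xb == None) && (xc == None)).

Definition o0 : 'I_6 := @Ordinal 6 0 isT.
Definition o1 : 'I_6 := @Ordinal 6 1 isT.
Definition o2 : 'I_6 := @Ordinal 6 2 isT.

Definition o3 : 'I_6 := @Ordinal 6 3 isT.
Definition o4 : 'I_6 := @Ordinal 6 4 isT.
Definition o5 : 'I_6 := @Ordinal 6 5 isT.
Definition L6 : seq (option 'I_6) := [:: None; Some o0; Some o1; Some o2; Some o3; Some o4; Some o5].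

Lemma L6_all (x : option 'I_6) : x \in L6.
Proof.
case: x => [[m hm]|]; last by [].
do 6 (case: m hm => [|m] hm; first by vm_compute).
by move: hm.
Qed.

Definition SC1b := all (fun xa => all (fun xb => all (fun xc =>
  acyc3 o0 o1 o2 xa xb xc ==>
  (stAB o0 o1 o2 (stBC o0 o1 o2 (stAB o0 o1 o2 (xa, xb, xc))) ==
   stBC o0 o1 o2 (stAB o0 o1 o2 (stBC o0 o1 o2 (xa, xb, xc))))) L6) L6) L6.

Lemma SC1 : SC1b.
Proof. by vm_compute. Qed.

Definition SC2b := all (fun xa => all (fun xb => all (fun xc =>
  acyc3 o0 o1 o2 xa xb xc ==> all (fun w =>
  (gAB o0 o1 o2 (stBC o0 o1 o2 (stAB o0 o1 o2 (xa, xb, xc)))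
     (gBC o0 o1 o2 (stAB o0 o1 o2 (xa, xb, xc)) (gAB o0 o1 o2 (xa, xb, xc) w)) ==
   gBC o0 o1 o2 (stAB o0 o1 o2 (stBC o0 o1 o2 (xa, xb, xc)))
     (gAB o0 o1 o2 (stBC o0 o1 o2 (xa, xb, xc)) (gBC o0 o1 o2 (xa, xb, xc) w)))) [:: o0; o1; o2]) L6) L6) L6.

Lemma SC2 : SC2b.
Proof. by vm_compute. Qed.

Lemma L6_ind (P : option 'I_6 -> Prop) : P None -> P (Some o0) -> P (Some o1) -> P (Some o2) ->
  P (Some o3) -> P (Some o4) -> P (Some o5) -> forall x, P x.
Proof.
move=> h0 h1 h2 h3 h4 h5 h6 x; have := L6_all x.
rewrite /L6 !inE => /orP [/eqP -> //|/orP [/eqP -> //|/orP [/eqP -> //|/orP [/eqP -> //|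
  /orP [/eqP -> //|/orP [/eqP -> //| /eqP -> //]]]]]].
Qed.

Lemma SC3 (R : comNzRingType) (xa xb xc : option 'I_6) (s : R * R * R) :
  acyc3 o0 o1 o2 xa xb xc -> root1 xa xb xc ->
  WL (fun u v => u + v)%R (fun u v => u - v)%R 0%R 1%R o0 o1 o2 (xa, xb, xc) s =
  WR (fun u v => u + v)%R (fun u v => u - v)%R 0%R 1%R o0 o1 o2 (xa, xb, xc) s.
Proof.
case: s => [[sa sb] sc].
pose add := (fun u v : R => u + v)%R; have addE : add = (fun u v : R => u + v)%R by [].
pose sub := (fun u v : R => u - v)%R; have subE : sub = (fun u v : R => u - v)%R by [].
pose zero := (0 : R)%R; have zeroE : zero = 0%R by [].
pose one := (1 : R)%R; have oneE : one = 1%R by [].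
rewrite -addE -subE -zeroE -oneE.
clearbody add sub zero one.
elim/L6_ind: xa; elim/L6_ind: xb; elim/L6_ind: xc; cbv -[GRing.ComNzRing.sort]; move=> // _ _; subst; ring.
Qed.

Definition map3 n m (g : 'I_n -> 'I_m) (t : T3 n) : T3 m :=
  let: (xa, xb, xc) := t in (omap g xa, omap g xb, omap g xc).
Definition ov3 n (V : pred 'I_n) (t : T3 n) : bool :=
  let: (xa, xb, xc) := t in [&& ov V xa, ov V xb & ov V xc].

Lemma stAB_map n m (g : 'I_n -> 'I_m) (V : pred 'I_n) a b c t : {in V &, injective g} ->
  V a -> V b -> V c -> ov3 V t ->
  map3 g (stAB a b c t) = stAB (g a) (g b) (g c) (map3 g t).
Proof.
case: t => [[xa xb] xc] hi ha hb hc /and3P [h1 h2 h3] /=.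
by rewrite !(sT_map hi).
Qed.

Lemma stBC_map n m (g : 'I_n -> 'I_m) (V : pred 'I_n) a b c t : {in V &, injective g} ->
  V a -> V b -> V c -> ov3 V t ->
  map3 g (stBC a b c t) = stBC (g a) (g b) (g c) (map3 g t).
Proof.
case: t => [[xa xb] xc] hi ha hb hc /and3P [h1 h2 h3] /=.
by rewrite !(sT_map hi).
Qed.

Lemma stAB_ov n (V : pred 'I_n) a b c t : V a -> V b -> V c -> ov3 V t -> ov3 V (stAB a b c t).
Proof.
case: t => [[xa xb] xc] ha hb hc /and3P [h1 h2 h3] /=.
by rewrite !sT_ov.
Qed.

Lemma stBC_ov n (V : pred 'I_n) a b c t : V a -> V b -> V c -> ov3 V t -> ov3 V (stBC a b c t).
Proof.
case: t => [[xa xb] xc] ha hb hc /and3P [h1 h2 h3] /=.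
by rewrite !sT_ov.
Qed.

Lemma szAB_map {R : Type} (add sub : R -> R -> R) n m (g : 'I_n -> 'I_m) (V : pred 'I_n) a b c t s :
  {in V &, injective g} -> V a -> V b -> V c -> ov3 V t ->
  szAB add sub (g a) (g b) (g c) (map3 g t) s = szAB add sub a b c t s.
Proof.
case: t => [[xa xb] xc]; case: s => [[sa sb] sc] hi ha hb hc /and3P [h1 h2 h3] /=.
by rewrite !(szT_map _ _ _ _ _ hi).
Qed.

Lemma szBC_map {R : Type} (add sub : R -> R -> R) n m (g : 'I_n -> 'I_m) (V : pred 'I_n) a b c t s :
  {in V &, injective g} -> V a -> V b -> V c -> ov3 V t ->
  szBC add sub (g a) (g b) (g c) (map3 g t) s = szBC add sub a b c t s.
Proof.
case: t => [[xa xb] xc]; case: s => [[sa sb] sc] hi ha hb hc /and3P [h1 h2 h3] /=.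
by rewrite !(szT_map _ _ _ _ _ hi).
Qed.

Lemma wAB_map {R : Type} (zero one : R) n m (g : 'I_n -> 'I_m) (V : pred 'I_n) a b c t s :
  {in V &, injective g} -> V a -> V b -> V c -> ov3 V t ->
  wAB zero one (g a) (g b) (g c) (map3 g t) s = wAB zero one a b c t s.
Proof.
case: t => [[xa xb] xc]; case: s => [[sa sb] sc] hi ha hb hc /and3P [h1 h2 h3] /=.
by rewrite (wZ_map _ _ _ hi).
Qed.

Lemma wBC_map {R : Type} (zero one : R) n m (g : 'I_n -> 'I_m) (V : pred 'I_n) a b c t s :
  {in V &, injective g} -> V a -> V b -> V c -> ov3 V t ->
  wBC zero one (g a) (g b) (g c) (map3 g t) s = wBC zero one a b c t s.
Proof.
case: t => [[xa xb] xc]; case: s => [[sa sb] sc] hi ha hb hc /and3P [h1 h2 h3] /=.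
by rewrite (wZ_map _ _ _ hi).
Qed.

Lemma WL_map {R : Type} (add sub : R -> R -> R) (zero one : R) n m (g : 'I_n -> 'I_m) (V : pred 'I_n) a b c t s :
  {in V &, injective g} -> V a -> V b -> V c -> ov3 V t ->
  WL add sub zero one (g a) (g b) (g c) (map3 g t) s = WL add sub zero one a b c t s.
Proof.
move=> hi ha hb hc ht; rewrite /WL.
have t1 := stAB_ov ha hb hc ht; have t2 := stBC_ov ha hb hc t1.
rewrite -(stAB_map hi) // -(stBC_map hi) //.
rewrite !(szAB_map _ _ _ hi) // !(szBC_map _ _ _ hi) // !(wAB_map _ _ _ hi) // (wBC_map _ _ _ hi) //.
Qed.

Lemma WR_map {R : Type} (add sub : R -> R -> R) (zero one : R) n m (g : 'I_n -> 'I_m) (V : pred 'I_n) a b c t s :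
  {in V &, injective g} -> V a -> V b -> V c -> ov3 V t ->
  WR add sub zero one (g a) (g b) (g c) (map3 g t) s = WR add sub zero one a b c t s.
Proof.
move=> hi ha hb hc ht; rewrite /WR.
have t1 := stBC_ov ha hb hc ht; have t2 := stAB_ov ha hb hc t1.
rewrite -(stBC_map hi) // -(stAB_map hi) //.
rewrite !(szBC_map _ _ _ hi) // !(szAB_map _ _ _ hi) // !(wBC_map _ _ _ hi) // (wAB_map _ _ _ hi) //.
Qed.

Lemma gAB_map n m (g : 'I_n -> 'I_m) (V : pred 'I_n) a b c t w : {in V &, injective g} ->
  V a -> V b -> V c -> ov3 V t -> V w ->
  gAB (g a) (g b) (g c) (map3 g t) (g w) = g (gAB a b c t w).
Proof.
case: t => [[xa xb] xc] hi ha hb hc /and3P [h1 h2 h3] hw /=.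
exact: (gf_map _ hi).
Qed.

Lemma gBC_map n m (g : 'I_n -> 'I_m) (V : pred 'I_n) a b c t w : {in V &, injective g} ->
  V a -> V b -> V c -> ov3 V t -> V w ->
  gBC (g a) (g b) (g c) (map3 g t) (g w) = g (gBC a b c t w).
Proof.
case: t => [[xa xb] xc] hi ha hb hc /and3P [h1 h2 h3] hw /=.
exact: (gf_map _ hi).
Qed.

Lemma gAB_V n (V : pred 'I_n) a b c t w : V a -> V b -> V w -> V (gAB a b c t w).
Proof. by case: t => [[xa xb] xc] /=; exact: gfV. Qed.
Lemma gBC_V n (V : pred 'I_n) a b c t w : V b -> V c -> V w -> V (gBC a b c t w).
Proof. by case: t => [[xa xb] xc] /=; exact: gfV. Qed.

Lemma map3_inj n m (g : 'I_n -> 'I_m) (V : pred 'I_n) t t' : {in V &, injective g} ->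
  ov3 V t -> ov3 V t' -> map3 g t = map3 g t' -> t = t'.
Proof.
case: t => [[xa xb] xc]; case: t' => [[ya yb] yc] hi /and3P [h1 h2 h3] /and3P [k1 k2 k3] /= [e1 e2 e3].
have E : forall x y, ov V x -> ov V y -> omap g x = omap g y -> x = y.
  by move=> x y hx hy exy; apply/eqP; rewrite -(eq_omap hi hx hy) exy.
by rewrite (E _ _ h1 k1 e1) (E _ _ h2 k2 e2) (E _ _ h3 k3 e3).
Qed.

Lemma acyc3_map n m (g : 'I_n -> 'I_m) (V : pred 'I_n) a b c xa xb xc : {in V &, injective g} ->
  V a -> V b -> V c -> ov V xa -> ov V xb -> ov V xc ->
  acyc3 (g a) (g b) (g c) (omap g xa) (omap g xb) (omap g xc) = acyc3 a b c xa xb xc.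
Proof.
move=> hi ha hb hc h1 h2 h3; rewrite /acyc3.
have E : forall x y, V y -> ov V x -> (omap g x == Some (g y)) = (x == Some y).
  by move=> x y hy hx; rewrite -(eq_omap hi hx (hy : ov V (Some y))).
by rewrite !E.
Qed.

Lemma root1_map n m (g : 'I_n -> 'I_m) xa xb xc :
  root1 (omap g xa) (omap g xb) (omap g xc) = root1 xa xb xc.
Proof. by rewrite /root1 !omap_None. Qed.

Definition enc n (a b c : 'I_n) (xa xb : option 'I_n) (v : 'I_n) : 'I_6 :=
  if v == a then o0 else if v == b then o1 else if v == c then o2
  else if Some v == xa then o3 else if Some v == xb then o4 else o5.
Definition Vs n (a b c : 'I_n) (xa xb xc : option 'I_n) : pred 'I_n :=
  fun v => [|| v == a, v == b, v == c, Some v == xa, Some v == xb | Some v == xc].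
Definition dec n (a b c : 'I_n) (xa xb xc : option 'I_n) (k : 'I_6) : 'I_n :=
  match val k with 0 => a | 1 => b | 2 => c | 3 => odflt a xa | 4 => odflt a xb | _ => odflt a xc end.

Lemma encK n (a b c : 'I_n) xa xb xc v : Vs a b c xa xb xc v ->
  dec a b c xa xb xc (enc a b c xa xb v) = v.
Proof.
rewrite /Vs /enc => hv.
case: ifP hv => [/eqP -> //|h1] /=.
case: ifP => [/eqP -> //|h2] /=.
case: ifP => [/eqP -> //|h3] /=.
case: ifP => [/eqP <- //|h4] /=.
case: ifP => [/eqP <- //|h5] /=.
by move/eqP <-.
Qed.

Lemma enc_inj n (a b c : 'I_n) xa xb xc : {in Vs a b c xa xb xc &, injective (enc a b c xa xb)}.
Proof.
move=> v w hv hw e.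
by rewrite -(encK hv) -(encK hw) e.
Qed.

Definition tri n (a b c : 'I_n) (p : ptree n) : T3 n := (p a, p b, p c).
Definition szs n (a b c : 'I_n) (p : ptree n) : 'Z_n * 'Z_n * 'Z_n := (szZ p a, szZ p b, szZ p c).
Definition addZ n := (fun u v : 'Z_n => (u + v)%R).
Definition subZ n := (fun u v : 'Z_n => (u - v)%R).

Lemma tri_AB n (a b c : 'I_n) (p : ptree n) : tri a b c (sigmaT a b p) = stAB a b c (tri a b c p).
Proof. by rewrite /tri /stAB !sigmaT_E. Qed.
Lemma tri_BC n (a b c : 'I_n) (p : ptree n) : tri a b c (sigmaT b c p) = stBC a b c (tri a b c p).
Proof. by rewrite /tri /stBC !sigmaT_E. Qed.

Lemma szs_AB n (a b c : 'I_n) (p : ptree n) : a != b -> is_tree p ->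
  szs a b c (sigmaT a b p) = szAB (@addZ n) (@subZ n) a b c (tri a b c p) (szs a b c p).
Proof. by move=> hab tp; rewrite /szs !szE. Qed.
Lemma szs_BC n (a b c : 'I_n) (p : ptree n) : b != c -> is_tree p ->
  szs a b c (sigmaT b c p) = szBC (@addZ n) (@subZ n) a b c (tri a b c p) (szs a b c p).
Proof. by move=> hbc tp; rewrite /szs !szE. Qed.

Lemma w_AB n (a b c : 'I_n) (p : ptree n) : a != b -> is_tree p ->
  (if p b == None then ((wbar p a)%:R : 'Z_n)%R else 0%R) = wAB 0%R 1%R a b c (tri a b c p) (szs a b c p).
Proof. by move=> hab tp; rewrite wE. Qed.
Lemma w_BC n (a b c : 'I_n) (p : ptree n) : b != c -> is_tree p ->
  (if p c == None then ((wbar p b)%:R : 'Z_n)%R else 0%R) = wBC 0%R 1%R a b c (tri a b c p) (szs a b c p).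
Proof. by move=> hbc tp; rewrite wE. Qed.

Lemma sigmaT_o n (a b : 'I_n) (p : ptree n) v : v != a -> v != b ->
  sigmaT a b p v = omap (gf a b (p a) (p b)) (p v).
Proof. by move=> va vb; rewrite sigmaT_E sT_o. Qed.

Lemma cyc2 n (p : ptree n) x y : wf p -> p x = Some y -> p y = Some x -> False.
Proof. by move=> hw h1 h2; apply: (@cycle_false _ p x hw); rewrite h1; exact: reach_step h2. Qed.

Lemma cyc3 n (p : ptree n) x y z : wf p -> p x = Some y -> p y = Some z -> p z = Some x -> False.
Proof.
move=> hw h1 h2 h3; apply: (@cycle_false _ p x hw); rewrite h1.
exact: reach_trans (reach_step h2) (reach_step h3).
Qed.

Lemma tree_acyc3 n (a b c : 'I_n) (p : ptree n) : is_tree p -> acyc3 a b c (p a) (p b) (p c).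
Proof.
case/is_treeP => _ hw; rewrite /acyc3 !no_loop //=.
have c2 : forall x y, ~~ ((p x == Some y) && (p y == Some x)).
  by move=> x y; apply/negP => /andP [/eqP h1 /eqP h2]; exact: (cyc2 hw h1 h2).
have c3 : forall x y z, ~~ [&& p x == Some y, p y == Some z & p z == Some x].
  by move=> x y z; apply/negP => /and3P [/eqP h1 /eqP h2 /eqP h3]; exact: (cyc3 hw h1 h2 h3).
by rewrite !c2 !c3.
Qed.

Lemma tree_root1 n (a b c : 'I_n) (p : ptree n) : a != b -> b != c -> a != c -> is_tree p ->
  root1 (p a) (p b) (p c).
Proof.
move=> hab hbc hac /is_treeP [[r hr] _].
have nr : forall x y, x != y -> ~~ ((p x == None) && (p y == None)).
  move=> x y hxy; rewrite !hr; apply/negP => /andP [/eqP e1 /eqP e2].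
  by move: hxy; rewrite e1 e2 eqxx.
by rewrite /root1 !nr.
Qed.

Lemma ov3_tri n (a b c : 'I_n) (p : ptree n) : ov3 (Vs a b c (p a) (p b) (p c)) (tri a b c p).
Proof.
rewrite /ov3 /tri /Vs.
by apply/and3P; split; [case E: (p a) | case E: (p b) | case E: (p c)] => //=;
   rewrite eqxx !orbT.
Qed.

Lemma gAB_fix n (a b c : 'I_n) T w : w != a -> w != b -> gAB a b c T w = w.
Proof. by case: T => [[? ?] ?] /=; exact: gf_fix. Qed.
Lemma gBC_fix n (a b c : 'I_n) T w : w != b -> w != c -> gBC a b c T w = w.
Proof. by case: T => [[? ?] ?] /=; exact: gf_fix. Qed.

Lemma SC1P (xa xb xc : option 'I_6) : acyc3 o0 o1 o2 xa xb xc ->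
  stAB o0 o1 o2 (stBC o0 o1 o2 (stAB o0 o1 o2 (xa, xb, xc))) =
  stBC o0 o1 o2 (stAB o0 o1 o2 (stBC o0 o1 o2 (xa, xb, xc))).
Proof.
move=> h; have := SC1; rewrite /SC1b.
move=> /allP /(_ _ (L6_all xa)) /allP /(_ _ (L6_all xb)) /allP /(_ _ (L6_all xc)).
by move=> /implyP /(_ h) /eqP.
Qed.

Lemma SC2P (xa xb xc : option 'I_6) w : acyc3 o0 o1 o2 xa xb xc -> w \in [:: o0; o1; o2] ->
  gAB o0 o1 o2 (stBC o0 o1 o2 (stAB o0 o1 o2 (xa, xb, xc)))
     (gBC o0 o1 o2 (stAB o0 o1 o2 (xa, xb, xc)) (gAB o0 o1 o2 (xa, xb, xc) w)) =
  gBC o0 o1 o2 (stAB o0 o1 o2 (stBC o0 o1 o2 (xa, xb, xc)))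
     (gAB o0 o1 o2 (stBC o0 o1 o2 (xa, xb, xc)) (gBC o0 o1 o2 (xa, xb, xc) w)).
Proof.
move=> h hw; have := SC2; rewrite /SC2b.
move=> /allP /(_ _ (L6_all xa)) /allP /(_ _ (L6_all xb)) /allP /(_ _ (L6_all xc)).
by move=> /implyP /(_ h) /allP /(_ _ hw) /eqP.
Qed.

Lemma tri3L n (a b c : 'I_n) (p : ptree n) :
  tri a b c (sigmaT a b (sigmaT b c (sigmaT a b p))) = stAB a b c (stBC a b c (stAB a b c (tri a b c p))).
Proof. by rewrite tri_AB tri_BC tri_AB. Qed.
Lemma tri3R n (a b c : 'I_n) (p : ptree n) :
  tri a b c (sigmaT b c (sigmaT a b (sigmaT b c p))) = stBC a b c (stAB a b c (stBC a b c (tri a b c p))).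
Proof. by rewrite tri_BC tri_AB tri_BC. Qed.

Lemma map3_L n m (g : 'I_n -> 'I_m) (V : pred 'I_n) a b c t : {in V &, injective g} ->
  V a -> V b -> V c -> ov3 V t ->
  map3 g (stAB a b c (stBC a b c (stAB a b c t))) =
  stAB (g a) (g b) (g c) (stBC (g a) (g b) (g c) (stAB (g a) (g b) (g c) (map3 g t))).
Proof.
move=> hi ha hb hc ht.
have o1 := stAB_ov ha hb hc ht; have o2 := stBC_ov ha hb hc o1.
by rewrite (stAB_map hi) // (stBC_map hi) // (stAB_map hi).
Qed.
Lemma map3_R n m (g : 'I_n -> 'I_m) (V : pred 'I_n) a b c t : {in V &, injective g} ->
  V a -> V b -> V c -> ov3 V t ->
  map3 g (stBC a b c (stAB a b c (stBC a b c t))) =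
  stBC (g a) (g b) (g c) (stAB (g a) (g b) (g c) (stBC (g a) (g b) (g c) (map3 g t))).
Proof.
move=> hi ha hb hc ht.
have o1 := stBC_ov ha hb hc ht; have o2 := stAB_ov ha hb hc o1.
by rewrite (stBC_map hi) // (stAB_map hi) // (stBC_map hi).
Qed.

Lemma htri_lem n (a b c : 'I_n) (p : ptree n) :
  let g := enc a b c (p a) (p b) in
  let V := Vs a b c (p a) (p b) (p c) in
  {in V &, injective g} -> V a -> V b -> V c -> g a = o0 -> g b = o1 -> g c = o2 ->
  acyc3 o0 o1 o2 (omap g (p a)) (omap g (p b)) (omap g (p c)) ->
  tri a b c (sigmaT a b (sigmaT b c (sigmaT a b p))) =
  tri a b c (sigmaT b c (sigmaT a b (sigmaT b c p))).
Proof.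
move=> g V hi ha hb hc ga gb gc small.
rewrite [LHS]tri3L [RHS]tri3R.
have ht : ov3 V (tri a b c p) := ov3_tri a b c p.
have o1' := stAB_ov ha hb hc ht; have o2' := stBC_ov ha hb hc o1'.
have o3' := stAB_ov ha hb hc o2'.
have q1 := stBC_ov ha hb hc ht; have q2 := stAB_ov ha hb hc q1.
have q3 := stBC_ov ha hb hc q2.
apply: (map3_inj hi o3' q3).
rewrite [LHS](map3_L hi ha hb hc ht) [RHS](map3_R hi ha hb hc ht).
rewrite ga gb gc.
exact: SC1P.
Qed.

Lemma chainL n (a b c : 'I_n) (p : ptree n) v : v != a -> v != b -> v != c ->
  sigmaT a b (sigmaT b c (sigmaT a b p)) v =
  omap (fun w => gAB a b c (stBC a b c (stAB a b c (tri a b c p)))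
          (gBC a b c (stAB a b c (tri a b c p)) (gAB a b c (tri a b c p) w))) (p v).
Proof.
move=> va vb vc.
rewrite (sigmaT_o _ va vb) (sigmaT_o _ vb vc) (sigmaT_o _ va vb).
have T1 := tri_AB a b c p.
have E0 : gf a b (p a) (p b) = gAB a b c (tri a b c p) by [].
move: (sigmaT a b p) T1 => q1 T1.
have T2 := tri_BC a b c q1.
have E1 : gf b c (q1 b) (q1 c) = gBC a b c (tri a b c q1) by [].
move: (sigmaT b c q1) T2 => q2 T2.
have E2 : gf a b (q2 a) (q2 b) = gAB a b c (tri a b c q2) by [].
rewrite E2 E1 E0 T2 T1.
by case: (p v).
Qed.

Lemma chainR n (a b c : 'I_n) (p : ptree n) v : v != a -> v != b -> v != c ->
  sigmaT b c (sigmaT a b (sigmaT b c p)) v =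
  omap (fun w => gBC a b c (stAB a b c (stBC a b c (tri a b c p)))
          (gAB a b c (stBC a b c (tri a b c p)) (gBC a b c (tri a b c p) w))) (p v).
Proof.
move=> va vb vc.
rewrite (sigmaT_o _ vb vc) (sigmaT_o _ va vb) (sigmaT_o _ vb vc).
have T1 := tri_BC a b c p.
have E0 : gf b c (p b) (p c) = gBC a b c (tri a b c p) by [].
move: (sigmaT b c p) T1 => q1 T1.
have T2 := tri_AB a b c q1.
have E1 : gf a b (q1 a) (q1 b) = gAB a b c (tri a b c q1) by [].
move: (sigmaT a b q1) T2 => q2 T2.
have E2 : gf b c (q2 b) (q2 c) = gBC a b c (tri a b c q2) by [].
rewrite E2 E1 E0 T2 T1.
by case: (p v).
Qed.

Lemma weightL n (a b c : 'I_n) (p : ptree n) (e : 'Z_n) : a != b -> b != c -> is_tree p ->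
  (sigmaA a b (sigmaA b c (sigmaA a b (p, e)))).2 =
  (e + WL (@addZ n) (@subZ n) 0%R 1%R a b c (tri a b c p) (szs a b c p))%R.
Proof.
move=> hab hbc tp.
have T1 := tri_AB a b c p; have S1 := szs_AB c hab tp; have t1 := treeT hab tp.
have W1 := w_AB c hab tp.
rewrite (sigmaA_E a b p e).
move: (sigmaT a b p) T1 S1 t1 => q1 T1 S1 t1.
have T2 := tri_BC a b c q1; have S2 := szs_BC a hbc t1; have t2 := treeT hbc t1.
have W2 := w_BC a hbc t1.
rewrite (sigmaA_E b c q1 _).
move: (sigmaT b c q1) T2 S2 t2 => q2 T2 S2 t2.
have W3 := w_AB c hab t2.
rewrite (sigmaA_E a b q2 _) /=.
rewrite W1 W2 W3 T2 S2 T1 S1.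
by rewrite /WL /addZ !addrA.
Qed.

Lemma weightR n (a b c : 'I_n) (p : ptree n) (e : 'Z_n) : a != b -> b != c -> is_tree p ->
  (sigmaA b c (sigmaA a b (sigmaA b c (p, e)))).2 =
  (e + WR (@addZ n) (@subZ n) 0%R 1%R a b c (tri a b c p) (szs a b c p))%R.
Proof.
move=> hab hbc tp.
have T1 := tri_BC a b c p; have S1 := szs_BC a hbc tp; have t1 := treeT hbc tp.
have W1 := w_BC a hbc tp.
rewrite (sigmaA_E b c p e).
move: (sigmaT b c p) T1 S1 t1 => q1 T1 S1 t1.
have T2 := tri_AB a b c q1; have S2 := szs_AB c hab t1; have t2 := treeT hab t1.
have W2 := w_AB c hab t1.
rewrite (sigmaA_E a b q1 _).
move: (sigmaT a b q1) T2 S2 t2 => q2 T2 S2 t2.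
have W3 := w_BC a hbc t2.
rewrite (sigmaA_E b c q2 _) /=.
rewrite W1 W2 W3 T2 S2 T1 S1.
by rewrite /WR /addZ !addrA.
Qed.

Lemma sigmaA_fst n (a b : 'I_n) (x : aug n) : (sigmaA a b x).1 = sigmaT a b x.1.
Proof. by []. Qed.

Lemma braid_tree n (a b c : 'I_n) (p : ptree n) : a != b -> b != c -> a != c -> is_tree p ->
  sigmaT a b (sigmaT b c (sigmaT a b p)) = sigmaT b c (sigmaT a b (sigmaT b c p)).
Proof.
move=> hab hbc hac tp.
have hba : (b == a) = false by rewrite eq_sym; apply/negbTE.
have hca : (c == a) = false by rewrite eq_sym; apply/negbTE.
have hcb : (c == b) = false by rewrite eq_sym; apply/negbTE.
pose g := enc a b c (p a) (p b).
pose V := Vs a b c (p a) (p b) (p c).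
have hi : {in V &, injective g} := @enc_inj n a b c (p a) (p b) (p c).
have ha : V a by rewrite /V /Vs eqxx.
have hb : V b by rewrite /V /Vs eqxx orbT.
have hc : V c by rewrite /V /Vs eqxx !orbT.
have ga : g a = o0 by rewrite /g /enc eqxx.
have gb : g b = o1 by rewrite /g /enc hba eqxx.
have gc : g c = o2 by rewrite /g /enc hca hcb eqxx.
have ht : ov3 V (tri a b c p) := ov3_tri a b c p.
have small : acyc3 o0 o1 o2 (omap g (p a)) (omap g (p b)) (omap g (p c)).
  rewrite -ga -gb -gc (acyc3_map hi) //; first exact: tree_acyc3.
  - by case/and3P: ht. - by case/and3P: ht. - by case/and3P: ht.
have htri := htri_lem hi ha hb hc ga gb gc small.
have hL := @chainL n a b c p; have hR := @chainR n a b c p.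
move: (sigmaT a b (sigmaT b c (sigmaT a b p))) (sigmaT b c (sigmaT a b (sigmaT b c p))) htri hL hR.
move=> X Y htri hL hR.
apply/ffunP => v.
case: (altP (v =P a)) => [->|va]; first by move: htri; rewrite /tri => -[-> _ _].
case: (altP (v =P b)) => [->|vb]; first by move: htri; rewrite /tri => -[_ -> _].
case: (altP (v =P c)) => [->|vc]; first by move: htri; rewrite /tri => -[_ _ ->].
rewrite (hL _ va vb vc) (hR _ va vb vc).
case: (p v) => [w|] //; apply: (congr1 Some); cbv beta.
have [hw|hw] : (w \in [:: a; b; c]) \/ (w \notin [:: a; b; c]).
  by case: (w \in [:: a; b; c]); [left|right].
  have Vw : V w by move: hw; rewrite /V /Vs !inE => /or3P [] ->; rewrite ?orbT.
  have o1' := stAB_ov ha hb hc ht; have o2' := stBC_ov ha hb hc o1'.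
  have q1 := stBC_ov ha hb hc ht; have q2 := stAB_ov ha hb hc q1.
  have H1 : V (gAB a b c (stBC a b c (stAB a b c (tri a b c p)))
      (gBC a b c (stAB a b c (tri a b c p)) (gAB a b c (tri a b c p) w))).
    by apply: gAB_V => //; apply: gBC_V => //; apply: gAB_V.
  have H2 : V (gBC a b c (stAB a b c (stBC a b c (tri a b c p)))
      (gAB a b c (stBC a b c (tri a b c p)) (gBC a b c (tri a b c p) w))).
    by apply: gBC_V => //; apply: gAB_V => //; apply: gBC_V.
  apply: (hi _ _ H1 H2).
  rewrite -[LHS](gAB_map hi) //; last by apply: gBC_V => //; apply: gAB_V.
  rewrite -[RHS](gBC_map hi) //; last by apply: gAB_V => //; apply: gBC_V.
  rewrite -(gBC_map hi ha hb hc o1') //; last by apply: gAB_V.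
  rewrite -(gAB_map hi ha hb hc q1) //; last by apply: gBC_V.
  rewrite -(gAB_map hi ha hb hc ht) // -(gBC_map hi ha hb hc ht) //.
  rewrite (stBC_map hi ha hb hc o1') (stAB_map hi ha hb hc q1).
  rewrite (stAB_map hi ha hb hc ht) (stBC_map hi ha hb hc ht) ga gb gc.
  apply: SC2P => //.
  by move: hw; rewrite !inE => /or3P [] /eqP ->; rewrite ?ga ?gb ?gc eqxx ?orbT.
move: hw; rewrite !inE !negb_or => /and3P [wa wb wc].
by rewrite !gAB_fix // !gBC_fix // !gAB_fix.
Qed.

Lemma braid_weight n (a b c : 'I_n) (p : ptree n) : a != b -> b != c -> a != c -> is_tree p ->
  WL (@addZ n) (@subZ n) 0%R 1%R a b c (tri a b c p) (szs a b c p) =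
  WR (@addZ n) (@subZ n) 0%R 1%R a b c (tri a b c p) (szs a b c p).
Proof.
move=> hab hbc hac tp.
have hba : (b == a) = false by rewrite eq_sym; apply/negbTE.
have hca : (c == a) = false by rewrite eq_sym; apply/negbTE.
have hcb : (c == b) = false by rewrite eq_sym; apply/negbTE.
pose g := enc a b c (p a) (p b).
pose V := Vs a b c (p a) (p b) (p c).
have hi : {in V &, injective g} := @enc_inj n a b c (p a) (p b) (p c).
have ha : V a by rewrite /V /Vs eqxx.
have hb : V b by rewrite /V /Vs eqxx orbT.
have hc : V c by rewrite /V /Vs eqxx !orbT.
have ga : g a = o0 by rewrite /g /enc eqxx.
have gb : g b = o1 by rewrite /g /enc hba eqxx.
have gc : g c = o2 by rewrite /g /enc hca hcb eqxx.
have ht : ov3 V (tri a b c p) := ov3_tri a b c p.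
have small : acyc3 o0 o1 o2 (omap g (p a)) (omap g (p b)) (omap g (p c)).
  rewrite -ga -gb -gc (acyc3_map hi) //; first exact: tree_acyc3.
  - by case/and3P: ht. - by case/and3P: ht. - by case/and3P: ht.
have smallr : root1 (omap g (p a)) (omap g (p b)) (omap g (p c)).
  by rewrite root1_map; apply: tree_root1.
have H := SC3 (szs a b c p) small smallr.
have H' : WL (@addZ n) (@subZ n) 0%R 1%R o0 o1 o2 (map3 g (tri a b c p)) (szs a b c p) =
        WR (@addZ n) (@subZ n) 0%R 1%R o0 o1 o2 (map3 g (tri a b c p)) (szs a b c p) := H.
rewrite -{1}ga -{1}gb -{1}gc (WL_map _ _ _ _ _ hi) // in H'.
by rewrite -ga -gb -gc (WR_map _ _ _ _ _ hi) in H'.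
Qed.

Lemma braidA n (a b c : 'I_n) (p : ptree n) (e : 'Z_n) : a != b -> b != c -> a != c -> is_tree p ->
  sigmaA a b (sigmaA b c (sigmaA a b (p, e))) = sigmaA b c (sigmaA a b (sigmaA b c (p, e))).
Proof.
move=> hab hbc hac tp.
have L2 := weightL e hab hbc tp.
have R2 := weightR e hab hbc tp.
have BT := braid_tree hab hbc hac tp.
have BW := braid_weight hab hbc hac tp.
have L1 : (sigmaA a b (sigmaA b c (sigmaA a b (p, e)))).1 = sigmaT a b (sigmaT b c (sigmaT a b p)).
  by rewrite !sigmaA_fst.
have R1 : (sigmaA b c (sigmaA a b (sigmaA b c (p, e)))).1 = sigmaT b c (sigmaT a b (sigmaT b c p)).
  by rewrite !sigmaA_fst.
rewrite BT in L1; rewrite BW in L2.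
move: (sigmaA a b (sigmaA b c (sigmaA a b (p, e)))) (sigmaA b c (sigmaA a b (sigmaA b c (p, e)))) L1 L2 R1 R2.
move=> X Y L1 L2 R1 R2.
by apply: injective_projections; rewrite ?L1 ?R1 ?L2 ?R2.
Qed.

Lemma gf_inj n (a b : 'I_n) xa xb : injective (gf a b xa xb).
Proof. by rewrite /gf; case: ifP => _; [exact: inj_id | exact: swapv_inj]. Qed.

Lemma swap_comm n (a b c d : 'I_n) w : a != c -> a != d -> b != c -> b != d ->
  swapv a b (swapv c d w) = swapv c d (swapv a b w).
Proof.
move=> ac ad bc bd.
case: (altP (w =P a)) => [->|wa].
  rewrite (swapv_o ac ad) swapv_l swapv_o //; by rewrite ?bc ?bd.
case: (altP (w =P b)) => [->|wb].
  rewrite (swapv_o bc bd) swapv_r swapv_o //; by rewrite ?ac ?ad.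
case: (altP (w =P c)) => [->|wc].
  rewrite swapv_l (swapv_o _ _ : swapv a b c = c) ?swapv_l ?swapv_o //; by rewrite eq_sym.
case: (altP (w =P d)) => [->|wd].
  rewrite swapv_r (swapv_o _ _ : swapv a b d = d) ?swapv_r ?swapv_o //; by rewrite eq_sym.
by rewrite !swapv_o.
Qed.

Lemma gf_comm n (a b c d : 'I_n) xa xb xc xd w : a != c -> a != d -> b != c -> b != d ->
  gf a b xa xb (gf c d xc xd w) = gf c d xc xd (gf a b xa xb w).
Proof.
move=> ac ad bc bd; rewrite /gf.
by case: ifP => _; case: ifP => _ //; exact: swap_comm.
Qed.

Lemma gf_inv n (g : 'I_n -> 'I_n) (a b : 'I_n) xa xb : injective g -> g a = a ->
  gf a b (omap g xa) (omap g xb) = gf a b xa xb.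
Proof.
move=> hi ga; rewrite /gf.
have -> : (omap g xb == Some a) = (xb == Some a).
  by rewrite -{1}ga -[Some (g a)]/(omap g (Some a)) (inj_eq (inj_omap hi)).
by [].
Qed.

Lemma sT_omap n (g : 'I_n -> 'I_n) a b xa xb v xv : injective g -> g a = a -> g b = b -> g v = v ->
  sT a b (omap g xa) (omap g xb) v (omap g xv) = omap g (sT a b xa xb v xv).
Proof.
move=> hi ga gb gv.
have hi' : {in (predT : pred 'I_n) &, injective g} by move=> x y _ _; exact: hi.
have ovT : forall z : option 'I_n, ov predT z by case.
have := @sT_map n n g predT a b xa xb v xv hi' isT isT isT (ovT xa) (ovT xb) (ovT xv).
by rewrite ga gb gv.
Qed.

Lemma far_T n (a b c d : 'I_n) (p : ptree n) : a != b -> c != d -> a != c -> a != d -> b != c -> b != d ->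
  sigmaT a b (sigmaT c d p) = sigmaT c d (sigmaT a b p).
Proof.
move=> ab cd ac ad bc bd.
have ca : c != a by rewrite eq_sym. have da : d != a by rewrite eq_sym.
have cb : c != b by rewrite eq_sym. have db : d != b by rewrite eq_sym.
set gcd := gf c d (p c) (p d); set gab := gf a b (p a) (p b).
have qa : sigmaT c d p a = omap gcd (p a) by rewrite sigmaT_o.
have qb : sigmaT c d p b = omap gcd (p b) by rewrite sigmaT_o.
have rc : sigmaT a b p c = omap gab (p c) by rewrite sigmaT_o.
have rd : sigmaT a b p d = omap gab (p d) by rewrite sigmaT_o.
have gcd_a : gcd a = a by rewrite /gcd gf_fix.
have gcd_b : gcd b = b by rewrite /gcd gf_fix.
have gab_c : gab c = c by rewrite /gab gf_fix.
have gab_d : gab d = d by rewrite /gab gf_fix.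
have i1 : gf a b (sigmaT c d p a) (sigmaT c d p b) = gab by rewrite qa qb gf_inv // /gcd; exact: gf_inj.
have i2 : gf c d (sigmaT a b p c) (sigmaT a b p d) = gcd by rewrite rc rd gf_inv // /gab; exact: gf_inj.
have igcd : injective gcd by exact: gf_inj.
have igab : injective gab by exact: gf_inj.
apply/ffunP => v.
case: (altP (v =P a)) => [->|va].
  rewrite [in RHS](sigmaT_o _ ac ad) i2 [in LHS]sigmaT_E qa qb [in RHS]sigmaT_E.
  by rewrite sT_omap ?gcd_a ?gcd_b.
case: (altP (v =P b)) => [->|vb].
  rewrite [in RHS](sigmaT_o _ bc bd) i2 [in LHS]sigmaT_E qa qb [in RHS]sigmaT_E.
  by rewrite sT_omap ?gcd_a ?gcd_b.
case: (altP (v =P c)) => [->|vc].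
  rewrite [in LHS](sigmaT_o _ ca cb) i1 [in LHS]sigmaT_E [in RHS]sigmaT_E rc rd.
  by rewrite sT_omap ?gab_c ?gab_d.
case: (altP (v =P d)) => [->|vd].
  rewrite [in LHS](sigmaT_o _ da db) i1 [in LHS]sigmaT_E [in RHS]sigmaT_E rc rd.
  by rewrite sT_omap ?gab_c ?gab_d.
rewrite [in LHS](sigmaT_o _ va vb) i1 [in LHS](sigmaT_o _ vc vd) [in RHS](sigmaT_o _ vc vd) i2.
rewrite [in RHS](sigmaT_o _ va vb) -/gab -/gcd.
case: (p v) => [w|] //; apply: (congr1 Some).
by rewrite /gab /gcd gf_comm.
Qed.

Lemma farA n (a b c d : 'I_n) (p : ptree n) (e : 'Z_n) :
  a != b -> c != d -> a != c -> a != d -> b != c -> b != d -> is_tree p ->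
  sigmaA a b (sigmaA c d (p, e)) = sigmaA c d (sigmaA a b (p, e)).
Proof.
move=> ab cd ac ad bc bd tp.
have ca : c != a by rewrite eq_sym. have da : d != a by rewrite eq_sym.
have cb : c != b by rewrite eq_sym. have db : d != b by rewrite eq_sym.
have tq := treeT cd tp; have tr := treeT ab tp.
rewrite !sigmaA_E far_T //; congr (_, _).
rewrite (wE ab tq) (wE cd tr) !wE //.
rewrite (sigmaT_o _ ac ad) (sigmaT_o _ bc bd) (sigmaT_o _ ca cb) (sigmaT_o _ da db).
rewrite (szE _ cd tp) (szE _ ab tp).
have s1 : szT c d (p c) (p d) (szZ p c) (szZ p d) a (szZ p a) = szZ p a.
  by rewrite /szT /szTg (negbTE ac) (negbTE ad).
have s2 : szT a b (p a) (p b) (szZ p a) (szZ p b) c (szZ p c) = szZ p c.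
  by rewrite /szT /szTg (negbTE ca) (negbTE cb).
rewrite s1 s2.
have W : forall (g : 'I_n -> 'I_n) x y (xx xy : option 'I_n) (s : 'Z_n), injective g -> g x = x -> g y = y ->
    wZ x y (omap g xx) (omap g xy) s = wZ x y xx xy s.
  move=> g x y xx xy s hi gx gy.
  have hi' : {in (predT : pred 'I_n) &, injective g} by move=> u w _ _; exact: hi.
  have ovT : forall z : option 'I_n, ov predT z by case.
  have := @wZ_map _ 0%R 1%R n n g predT x y xx xy s hi' isT isT (ovT xx) (ovT xy).
  by rewrite gx gy /wZ => ->.
rewrite !W //; try exact: gf_inj; try (by rewrite gf_fix).
by rewrite -!addrA [X in (_ + X)%R]addrC.
Qed.

Ltac splito2 x a b :=
  let w := fresh "w" in
  case: x => [w|]; [ case: (altP (w =P a)) => [->|?]; [| case: (altP (w =P b)) => [->|?] ] | ].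

Lemma sT_ab_injb n (a b : 'I_n) xa xb ya yb : a != b ->
  xa != Some a -> xb != Some b -> ~~ ((xa == Some b) && (xb == Some a)) ->
  ya != Some a -> yb != Some b -> ~~ ((ya == Some b) && (yb == Some a)) ->
  (sT a b xa xb a xa == sT a b ya yb a ya) -> (sT a b xa xb b xb == sT a b ya yb b yb) ->
  (xa == ya) && (xb == yb).
Proof.
move=> hab.
have hba : b != a by rewrite eq_sym.
rewrite /sT eqxx (negbTE hba) eqxx.
splito2 xa a b; splito2 xb a b; splito2 ya a b; splito2 yb a b; simp.
all: try by [].
all: repeat (case: ifP => [/eqP ?|?]; [subst|]); simp; try by [].
all: rewrite ?andbT; move=> _ _ _ _ _ _; try by [].
all: move=> /eqP ? /eqP ?; subst; rewrite ?eqxx //;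
  match goal with H : (?x == ?x) = false |- _ => by rewrite eqxx in H end.
Qed.

Lemma sigmaA_inj n (a b : 'I_n) (x y : aug n) : a != b -> is_aug x -> is_aug y ->
  sigmaA a b x = sigmaA a b y -> x = y.
Proof.
case: x => p e; case: y => p' e'; rewrite /is_aug /= => hab tp tp'.
rewrite !sigmaA_E => H.
have hT := congr1 fst H; have hw := congr1 snd H; rewrite /= in hT hw.
have [_ hw1] := proj1 (is_treeP p) tp; have [_ hw2] := proj1 (is_treeP p') tp'.
have c2 : forall (q : ptree n), wf q -> ~~ ((q a == Some b) && (q b == Some a)).
  by move=> q hq; apply/negP => /andP [/eqP h1 /eqP h2]; exact: (cyc2 hq h1 h2).
have h1 := congr1 (fun q : ptree n => q a) hT; have h2 := congr1 (fun q : ptree n => q b) hT.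
rewrite /= !sigmaT_E in h1 h2.
have /andP [/eqP ea /eqP eb] := sT_ab_injb hab (no_loop a hw1) (no_loop b hw1) (c2 _ hw1)
   (no_loop a hw2) (no_loop b hw2) (c2 _ hw2) (introT eqP h1) (introT eqP h2).
have ep : p = p'.
  apply/ffunP => v.
  case: (altP (v =P a)) => [->|va] //; case: (altP (v =P b)) => [->|vb] //.
  have := congr1 (fun q : ptree n => q v) hT; rewrite /= !sigmaT_o // ea eb.
  exact: (inj_omap (@gf_inj _ a b _ _)).
subst p'; congr (_, _).
exact: (addIr _ hw).
Qed.

Lemma sigmaA_tree n (a b : 'I_n) (x : aug n) : a != b -> is_aug x -> is_aug (sigmaA a b x).
Proof. by case: x => p e hab; rewrite /is_aug sigmaA_E /=; exact: treeT. Qed.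

Lemma sigmaA_bij n (a b : 'I_n) : a != b -> exists g : aug n -> aug n,
  forall x : aug n, is_aug x -> [/\ is_aug (g x), g (sigmaA a b x) = x & sigmaA a b (g x) = x].
Proof.
move=> hab.
pose A := [set x : aug n | is_aug x].
pose f := sigmaA a b.
have sub : f @: A \subset A.
  apply/subsetP => y /imsetP [x]; rewrite !inE => hx ->; exact: sigmaA_tree.
have card : #|f @: A| = #|A|.
  apply: card_in_imset => x y; rewrite !inE => hx hy; exact: sigmaA_inj.
have eqA : f @: A = A by apply/eqP; rewrite eqEcard sub card leqnn.
have surj : forall y, is_aug y -> exists2 x, is_aug x & f x = y.
  move=> y hy; have : y \in f @: A by rewrite eqA inE.
  by case/imsetP => x; rewrite inE => hx ->; exists x.
exists (fun y => if [pick x | is_aug x && (f x == y)] is Some x then x else y).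
move=> x hx; split.
- case: pickP => [z /andP [hz _] //|_]; exact: hx.
- case: pickP => [z /andP [hz /eqP e]|h].
    by apply: (sigmaA_inj hab hz hx).
  by move: (h x); rewrite hx eqxx.
- case: pickP => [z /andP [hz /eqP e] //|h].
  case: (surj x hx) => z hz e.
  by move: (h z); rewrite hz e eqxx.
Qed.

Lemma sigmaE n i (x : aug n) (h1 : i.-1 < n) (h2 : i < n) :
  sigma i x = sigmaA (Ordinal h1) (Ordinal h2) x.
Proof. by rewrite /sigma (insubT (fun k => k < n) h1) (insubT (fun k => k < n) h2). Qed.


From mathcomp Require Import zify.

Lemma ord_neq n (i j : nat) (hi : i < n) (hj : j < n) : i != j -> Ordinal hi != Ordinal hj.
Proof. by apply: contra => /eqP /(congr1 val) /= ->. Qed.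

Theorem theorem1p12 (n : nat) (hn : 2 <= n) :
  (* each sigma_i maps augmented trees to augmented trees *)
  (forall i, 1 <= i <= n - 1 -> forall x : aug n, is_aug x -> is_aug (sigma i x)) /\
  (* each sigma_i is a bijection of the set of augmented trees *)
  (forall i, 1 <= i <= n - 1 -> exists g : aug n -> aug n,
     forall x : aug n, is_aug x ->
       [/\ is_aug (g x), g (sigma i x) = x & sigma i (g x) = x]) /\
  (* far commutation *)
  (forall i j, 1 <= i <= n - 1 -> 1 <= j <= n - 1 -> 2 <= `|(i:int) - (j:int)|%N ->
     forall x : aug n, is_aug x -> sigma i (sigma j x) = sigma j (sigma i x)) /\
  (* braid relation *)
  (forall i, 1 <= i <= n - 2 -> forall x : aug n, is_aug x ->
     sigma i (sigma i.+1 (sigma i x)) = sigma i.+1 (sigma i (sigma i.+1 x))).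
Proof.
split; [|split; [|split]].
- move=> i /andP [i1 i2] x hx.
  have hi1 : i.-1 < n by lia.
  have hi2 : i < n by lia.
  rewrite (sigmaE x hi1 hi2).
  apply: sigmaA_tree hx; apply: ord_neq; lia.
- move=> i /andP [i1 i2].
  have hi1 : i.-1 < n by lia.
  have hi2 : i < n by lia.
  have hne : Ordinal hi1 != Ordinal hi2 by apply: ord_neq; lia.
  have [g hg] := sigmaA_bij hne.
  exists g => x hx.
  rewrite !(sigmaE _ hi1 hi2); exact: hg.
- move=> i j /andP [i1 i2] /andP [j1 j2] hij x hx.
  have hd : (i + 2 <= j) || (j + 2 <= i) by lia.
  have hi1 : i.-1 < n by lia.
  have hi2 : i < n by lia.
  have hj1 : j.-1 < n by lia.
  have hj2 : j < n by lia.
  rewrite (sigmaE _ hi1 hi2) (sigmaE _ hj1 hj2) (sigmaE _ hj1 hj2) (sigmaE _ hi1 hi2).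
  case: x hx => p e hx.
  apply: farA => //; apply: ord_neq; lia.
- move=> i /andP [i1 i2] x hx.
  have hi1 : i.-1 < n by lia.
  have hi2 : i < n by lia.
  have hi3 : i.+1 < n by lia.
  rewrite !(sigmaE _ hi1 hi2) !(@sigmaE n i.+1 _ hi2 hi3).
  case: x hx => p e hx.
  apply: braidA => //; apply: ord_neq; lia.
Qed.
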